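(* Let $\gamma>0$, $\theta\in\mathbb R^d$ and $\mathcal X\subseteq\mathbb R^d$. For $x\in\mathcal X$ and $y\in\{0,1,2,\dots\}$ define $$w_\gamma(x,y,\theta)=\exp\Big[\gamma y\,\theta^\top x-\frac{\gamma}{\gamma+1}\exp\{(\gamma+1)\theta^\top x\}\Big],\qquad S_\gamma(\theta,x,y)=w_\gamma(x,y,\theta)\big[y-\exp\{(\gamma+1)\theta^\top x\}\big]x,$$ and $\Phi_\gamma(x,y,\theta)=\theta^\top S_\gamma(\theta,x,y)$. Then for every fixed $y\in\{0,1,2,\dots\}$, $\sup_{x\in\mathcal X}|\Phi_\gamma(x,y,\theta)|<\infty$.
   Context: $S_\gamma$ is the $\gamma$-estimating score for the Poisson log-linear regression model $p(y|x,\theta)=\frac1{y!}\exp\{y\theta^\top x-\exp(\theta^\top x)\}$, computed with the reference measure having mass $1/y!$ at $y$. *)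

(* Defs.v *)
From HB Require Import structures.
From mathcomp Require Import all_boot all_order all_algebra.
From mathcomp Require Import all_classical all_reals all_analysis.
Set Implicit Arguments. Unset Strict Implicit. Unset Printing Implicit Defensive.
Import Order.TTheory GRing.Theory Num.Theory.
Local Open Scope ring_scope.

Definition dotv (R : realType) (d : nat) (u v : 'cV[R]_d) : R := (u^T *m v) 0 0.

Definition w_gamma (R : realType) (d : nat) (gamma : R) (x : 'cV[R]_d) (y : nat)
    (theta : 'cV[R]_d) : R :=
  expR (gamma * y%:R * dotv theta x
        - gamma / (gamma + 1) * expR ((gamma + 1) * dotv theta x)).

Definition S_gamma (R : realType) (d : nat) (gamma : R) (theta x : 'cV[R]_d) (y : nat)
    : 'cV[R]_d :=
  (w_gamma gamma x y theta * (y%:R - expR ((gamma + 1) * dotv theta x))) *: x.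

Definition Phi_gamma (R : realType) (d : nat) (gamma : R) (x : 'cV[R]_d) (y : nat)
    (theta : 'cV[R]_d) : R :=
  dotv theta (S_gamma gamma theta x y).

(* Main.v *)
Require Import Defs.
From mathcomp Require Import all_boot all_order all_algebra.
From mathcomp Require Import all_classical all_reals all_analysis.
From mathcomp Require Import ring lra.
Import Order.TTheory GRing.Theory Num.Theory.
Local Open Scope ring_scope.

Lemma powexp (R : realType) (x : R) (n : nat) : (0 < n)%N -> 0 <= x ->
  x ^+ n <= (n%:R)^+n * expR x.
Proof.
move=> n0 x0.
have hn : 0 < n%:R :> R by rewrite ltr0n.
have hx : 0 <= x / n%:R by apply: divr_ge0 => //; exact: ltW.
have h1 : x / n%:R <= expR (x / n%:R) by have := expR_ge1Dx (x / n%:R); lra.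
have h2 : (x / n%:R) ^+ n <= expR (x / n%:R) ^+ n.
  by apply: lerXn2r => //; rewrite qualifE /= ?(le_trans hx h1).
rewrite -expRM_natl mulrCA divff ?gt_eqF // mulr1 in h2.
have e : x ^+ n = n%:R ^+ n * (x / n%:R) ^+ n.
  by rewrite -exprMn mulrCA divff ?gt_eqF // mulr1.
rewrite e; apply: ler_wpM2l => //.
Qed.

Lemma key (R : realType) (a s : R) (y : nat) : 0 < a -> a <= 1 ->
  expR (a * y%:R * s - a * expR s) * `|y%:R - expR s| * `|s| <=
  y%:R / a + 1 + (y.+1)%:R * ((y.+2)%:R ^+ y.+2 / a ^+ y.+2).
Proof.
move=> a0 a1.
set E := expR _. set v := expR s.
have v0 : 0 < v := expR_gt0 s.
have E0 : 0 < E := expR_gt0 _.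
have y0 : 0 <= y%:R :> R by [].
have B0 : 0 <= (y.+1)%:R * ((y.+2)%:R ^+ y.+2 / a ^+ y.+2) :> R.
  by apply: mulr_ge0 => //; apply: divr_ge0; apply: exprn_ge0 => //; exact: ltW.
have ya0 : 0 <= y%:R / a :> R by apply: divr_ge0 => //; exact: ltW.
have hyv : `|y%:R - v| <= y%:R + v.
  rewrite ler_norml; apply/andP; split; lra.
have [s0|s0] := lerP s 0.
- rewrite (ler0_norm s0).
  have t1 : y%:R * E * (- s) <= y%:R / a.
    have [->|yp] := posnP y; first by rewrite !mul0r.
    have hE : E <= expR (a * s).
      rewrite ler_expR.
      have h1 : 0 <= a * expR s by apply: mulr_ge0; [exact: ltW| exact: ltW].
      have h2 : a * y%:R * s <= a * s.
        rewrite -mulrA ler_wpM2l ?(ltW a0) //.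
        have : 1 <= y%:R :> R by rewrite ler1n.
        nra.
      lra.
    have hq := expR_ge1Dx (- (a * s)).
    have pq : expR (a * s) * expR (- (a * s)) = 1 by rewrite -expRD subrr expR0.
    have hp : 0 < expR (a * s) := expR_gt0 _.
    have h3 : E * (- s) * a <= expR (a * s) * (- s) * a.
      by rewrite -!mulrA; apply: ler_wpM2r => //; nra.
    have : E * (- s) * a <= 1 by nra.
    move=> h.
    rewrite -mulrA; apply: ler_wpM2l => //.
    by rewrite -[a^-1]mul1r ler_pdivlMr.
  have t2 : v * E * (- s) <= 1.
    have hE : E <= 1.
      rewrite -expR0 ler_expR.
      have h1 : 0 <= a * v by apply: mulr_ge0; exact: ltW.
      have h2 : a * y%:R * s <= 0.
        by rewrite -mulrA; apply: mulr_ge0_le0; [exact: ltW | nra].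
      rewrite -/v; lra.
    have hq := expR_ge1Dx (- s).
    have pq : v * expR (- s) = 1 by rewrite /v -expRD subrr expR0.
    have hp : 0 < expR (- s) := expR_gt0 _.
    have h4 : v * (- s) <= 1 by nra.
    have h5 : 0 <= v * (- s) by nra.
    have -> : v * E * (- s) = E * (v * (- s)) by ring.
    nra.
  have : E * `|y%:R - v| * - s <= E * (y%:R + v) * - s.
    by apply: ler_wpM2r; [lra | apply: ler_wpM2l => //; exact: ltW].
  nra.
- rewrite (gtr0_norm s0).
  set n := y.+2.
  have hv1 : 1 + s <= v := expR_ge1Dx s.
  set Q := expR (- (a * v)).
  have Q0 : 0 < Q := expR_gt0 _.
  have hE : E <= v ^+ y * Q.
    rewrite /Q /v -expRM_natl -expRD ler_expR.
    have : a * y%:R * s <= y%:R * s.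
      have h : 0 <= s * y%:R * (1 - a) by apply: mulr_ge0; [apply: mulr_ge0 => //; exact: ltW | lra].
      nra.
    lra.
  have vy0 : 0 < v ^+ y by rewrite exprn_gt0.
  have hP := (@powexp _ (a * v) n) (isT : (0 < n)%N) (mulr_ge0 (ltW a0) (ltW v0)).
  rewrite exprMn in hP.
  have an0 : 0 < a ^+ n by rewrite exprn_gt0.
  have eQ : expR (a * v) * Q = 1 by rewrite /Q -expRD subrr expR0.
  have hvn : v ^+ n * Q <= n%:R ^+ n / a ^+ n.
    rewrite ler_pdivlMr // mulrAC.
    have -> : n%:R ^+ n = n%:R ^+ n * (expR (a * v) * Q) :> R by rewrite eQ mulr1.
    rewrite mulrA; apply: ler_wpM2r; [exact: ltW | by rewrite mulrC].
  have hvnE : v ^+ n = v ^+ y * v * v by rewrite /n !exprSr.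
  have L1 : E * `|y%:R - v| * s <= v ^+ y * Q * ((y.+1)%:R * v) * v.
    apply: ler_pM; [| lra | | lra].
    + by apply: mulr_ge0; [exact: ltW|].
    + apply: ler_pM => //; [exact: ltW | ].
      apply: (le_trans hyv); rewrite -addn1 natrD; nra.
  have : v ^+ y * Q * ((y.+1)%:R * v) * v = (y.+1)%:R * (v ^+ n * Q).
    by rewrite hvnE; ring.
  move=> e; rewrite e in L1.
  have : (y.+1)%:R * (v ^+ n * Q) <= (y.+1)%:R * (n%:R ^+ n / a ^+ n).
    by apply: ler_wpM2l.
  lra.
Qed.

Local Open Scope classical_set_scope.
Theorem mainTheorem9 (R : realType) (d : nat) (gamma : R) (theta : 'cV[R]_d)
    (X : set 'cV[R]_d) (hgamma : 0 < gamma) (y : nat) :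
  exists M : R, forall x, X x -> `|Phi_gamma gamma x y theta| <= M.
Proof.
set a := gamma / (gamma + 1).
have g1 : 0 < gamma + 1 by lra.
have a0 : 0 < a by apply: divr_gt0.
have a1 : a <= 1 by rewrite /a ler_pdivrMr //; lra.
exists (y%:R / a + 1 + (y.+1)%:R * ((y.+2)%:R ^+ y.+2 / a ^+ y.+2)).
move=> x _.
rewrite /Phi_gamma /S_gamma /w_gamma.
have dotZ : forall c, dotv theta (c *: x) = c * dotv theta x.
  by move=> c; rewrite /dotv -scalemxAr mxE.
rewrite dotZ.
set t := dotv theta x.
set s := (gamma + 1) * t.
have e1 : gamma * y%:R * t = a * y%:R * s.
  by rewrite /a /s; field; rewrite gt_eqF.
rewrite e1 -/a.
apply: le_trans _ (@key R a s y a0 a1).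
rewrite !normrM ger0_norm; last exact: ltW (expR_gt0 _).
apply: ler_wpM2l; first by apply: mulr_ge0; [exact: ltW (expR_gt0 _)|].
rewrite /s (gtr0_norm g1).
have h1 : 1 <= gamma + 1 by lra.
have := ler_wpM2r (normr_ge0 t) h1.
by rewrite mul1r.
Qed.
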